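(* Let $n\ge1$, let $f_1,\dots,f_n:\mathbb{R}^d\to\mathbb{R}$ be $L$-smooth (i.e. $\|\nabla f_i(x)-\nabla f_i(y)\|\le L\|x-y\|$ for all $x,y$), $f=\frac1n\sum_i f_i$, $f^\ast:=\inf_x f(x)$ and $\Delta_0:=f(x_0)-f^\ast$. Let $x_0,\dots,x_{T-1}$, $\nabla_0,\dots,\nabla_{T-1}$ and $\gamma_0,\dots,\gamma_{T-1}$ be the iterates, gradient estimators and step-sizes produced by AdaSpider (described in the context) with input $x_0$, $\beta_0>0$, $G_0>0$. Then there is an absolute constant $C>0$ such that \[ \mathbb{E}\Big[\sum_{t=0}^{T-1}\|\nabla_t\|\Big]\le C\Big(\Delta_0\beta_0+G_0+\frac{L}{\beta_0}\log\!\Big(1+nT\Big(\frac{L}{\beta_0G_0}+\frac{\|\nabla f(x_0)\|}{G_0}\Big)\Big)+\beta_0\,\mathbb{E}\Big[\sum_{t=0}^{T-1}\gamma_t\|\nabla f(x_t)-\nabla_t\|^2\Big]\Big)n^{1/4}\sqrt T. \]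
   Context: $\|\cdot\|$ is the Euclidean norm. AdaSpider: input $x_0\in\mathbb{R}^d$, $\beta_0>0$, $G_0>0$, horizon $T\ge1$. For $t=0,1,\dots,T-1$: if $t \bmod n=0$, set $\nabla_t:=\nabla f(x_t)$; otherwise pick $i_t\in\{1,\dots,n\}$ uniformly at random (independently of the past) and set $\nabla_t:=\nabla f_{i_t}(x_t)-\nabla f_{i_t}(x_{t-1})+\nabla_{t-1}$. Then set $\gamma_t:=1\big/\big(n^{1/4}\beta_0\sqrt{n^{1/2}G_0^2+\sum_{s=0}^t\|\nabla_s\|^2}\big)$ and $x_{t+1}:=x_t-\gamma_t\nabla_t$. *)

(* Defs.v *)
From HB Require Import structures.
From mathcomp Require Import all_boot all_order all_algebra.
From mathcomp Require Import all_classical all_reals all_analysis.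
Set Implicit Arguments. Unset Strict Implicit. Unset Printing Implicit Defensive.
Import Order.TTheory GRing.Theory Num.Theory.
Import numFieldNormedType.Exports.
Local Open Scope ring_scope.

Section AdaSpider.
Variable R : realType.

Definition dotv (d : nat) (u v : 'rV[R]_d) : R := \sum_(j < d) u 0 j * v 0 j.
Definition enorm (d : nat) (v : 'rV[R]_d) : R := Num.sqrt (dotv v v).

Definition is_gradient (d : nat) (h : 'rV[R]_d -> R) (g : 'rV[R]_d -> 'rV[R]_d) :=
  forall x, differentiable h x /\ forall v, 'd h x v = dotv (g x) v.

Definition avgf (n d : nat) (F : 'I_n -> 'rV[R]_d -> R) (x : 'rV[R]_d) : R :=
  n%:R^-1 * \sum_(i < n) F i x.
Definition avggrad (n d : nat) (G : 'I_n -> 'rV[R]_d -> 'rV[R]_d) (x : 'rV[R]_d)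
  : 'rV[R]_d := n%:R^-1 *: \sum_(i < n) G i x.

Section Alg.
Variables (n d : nat) (G : 'I_n -> 'rV[R]_d -> 'rV[R]_d) (x0 : 'rV[R]_d)
  (beta0 G0 : R) (idx : nat -> 'I_n).

Definition ada_gamma (Ssum : R) : R :=
  (Num.sqrt (Num.sqrt n%:R) * beta0 * Num.sqrt (Num.sqrt n%:R * G0 ^+ 2 + Ssum))^-1.

(* state at time t: (x_t, nabla_t, sum_{s<=t} ||nabla_s||^2);
   idx t is the index i_t sampled at time t (only used when t mod n <> 0). *)
Fixpoint ada_state (t : nat) : 'rV[R]_d * 'rV[R]_d * R :=
  match t with
  | 0 => let g := avggrad G x0 in (x0, g, enorm g ^+ 2)
  | t'.+1 =>
      let: (x, g, Ssum) := ada_state t' in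
      let x' := x - ada_gamma Ssum *: g in
      let g' := if (t'.+1 %% n == 0)%N then avggrad G x'
                else G (idx t'.+1) x' - G (idx t'.+1) x + g in
      (x', g', Ssum + enorm g' ^+ 2)
  end.

Definition ada_x t := (ada_state t).1.1.
Definition ada_nabla t := (ada_state t).1.2.
Definition ada_gam t := ada_gamma (ada_state t).2.
End Alg.

(* The random indices i_0..i_{T-1} as a finite function; extended by a
   default index beyond the horizon (never used). *)
Definition ext_idx (n T : nat) (i0 : 'I_n) (w : {ffun 'I_T -> 'I_n}) (t : nat) : 'I_n :=
  match insub t with Some o => w o | None => i0 end.

(* Expectation with respect to i.i.d. uniform indices = uniform average
   over all index sequences. *)
Definition Exp (n T : nat) (X : {ffun 'I_T -> 'I_n} -> R) : R :=
  (\sum_(w : {ffun 'I_T -> 'I_n}) X w) / #|{ffun 'I_T -> 'I_n}|%:R.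

End AdaSpider.

(* Main.v *)
Require Import Defs.
From HB Require Import structures.
From mathcomp Require Import all_boot all_order all_algebra.
From mathcomp Require Import all_classical all_reals all_analysis.
From mathcomp Require Import ring lra.
Import Order.TTheory GRing.Theory Num.Theory.
Import numFieldNormedType.Exports.
Local Open Scope ring_scope.


Section Dot.
Variables (R : realType) (d : nat).
Implicit Types u v w : 'rV[R]_d.

Lemma dotv_ge0 v : 0 <= dotv v v.
Proof. by apply: sumr_ge0 => j _; rewrite -expr2 sqr_ge0. Qed.

Lemma enorm_sqr v : enorm v ^+ 2 = dotv v v.
Proof. by rewrite /enorm sqr_sqrtr // dotv_ge0. Qed.

Lemma enorm_ge0 v : 0 <= enorm v.
Proof. exact: sqrtr_ge0. Qed.

Lemma dotv_quad u v (c : R) :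
  dotv (u - c *: v) (u - c *: v) = dotv u u - 2 * c * dotv u v + c ^+ 2 * dotv v v.
Proof.
rewrite /dotv mulr_sumr mulr_sumr -sumrB -big_split /=.
by apply: eq_bigr => j _; rewrite !mxE; ring.
Qed.

Lemma dotvZl v w (c : R) : dotv (c *: v) w = c * dotv v w.
Proof. by rewrite /dotv mulr_sumr; apply: eq_bigr => j _; rewrite !mxE mulrA. Qed.

Lemma dotvZr v w (c : R) : dotv v (c *: w) = c * dotv v w.
Proof. by rewrite /dotv mulr_sumr; apply: eq_bigr => j _; rewrite !mxE; ring. Qed.

Lemma dotvDl u v w : dotv (u + v) w = dotv u w + dotv v w.
Proof. by rewrite /dotv -big_split; apply: eq_bigr => j _; rewrite !mxE mulrDl. Qed.

Lemma dotvBl u v w : dotv (u - v) w = dotv u w - dotv v w.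
Proof. by rewrite /dotv -sumrB; apply: eq_bigr => j _; rewrite !mxE mulrBl. Qed.

Lemma dotv0 w v : dotv w w = 0 -> dotv w v = 0.
Proof.
move=> /eqP; rewrite psumr_eq0 => [/allP H|j _]; last by rewrite -expr2 sqr_ge0.
rewrite /dotv big1 // => j _.
have /implyP := H j (mem_index_enum _); rewrite -expr2 sqrf_eq0 => /(_ isT) /eqP ->.
by rewrite mul0r.
Qed.

Lemma enormZ_sqr (c : R) v : enorm (c *: v) ^+ 2 = c ^+ 2 * enorm v ^+ 2.
Proof. by rewrite !enorm_sqr dotvZl dotvZr mulrA expr2. Qed.

Lemma dot_lb (g h : 'rV[R]_d) : dotv h h - dotv (g - h) (g - h) <= 2 * dotv g h.
Proof.
have := dotv_quad g h 1; rewrite scale1r => ->.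
have := dotv_ge0 g; lra.
Qed.

Lemma lip_dot (L c : R) w v : 0 <= L -> 0 <= c <= 1 ->
  enorm w <= L * enorm (c *: v) -> dotv w v <= L * dotv v v.
Proof.
move=> L0 /andP[c0 c1] H.
have hv := dotv_ge0 v.
have hw : dotv w w <= L ^+ 2 * dotv v v.
  rewrite -enorm_sqr -enorm_sqr.
  have : enorm w ^+ 2 <= (L * enorm (c *: v)) ^+ 2.
    by rewrite ler_sqr ?nnegrE ?enorm_ge0 ?mulr_ge0 ?enorm_ge0.
  rewrite exprMn enormZ_sqr => /le_trans; apply.
  have e0 := enorm_ge0 v.
  have hc : c ^+ 2 <= 1 by rewrite expr_le1.
  rewrite ler_wpM2l ?sqr_ge0 //.
  by rewrite ler_piMl ?sqr_ge0.
have [L00|Lp] := eqVneq L 0.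
  rewrite L00 in hw *.
  rewrite mul0r (dotv0 w v) //; apply/eqP; rewrite eq_le dotv_ge0 andbT.
  by move: hw; rewrite expr2 mul0r mul0r.
have Lpos : 0 < L by rewrite lt_def Lp L0.
have := dotv_ge0 (w - L *: v); rewrite dotv_quad => h2.
have ww0 := dotv_ge0 w.
nra.
Qed.
End Dot.
Arguments dotv_ge0 {R d}.
Arguments enorm_sqr {R d}.
Arguments enorm_ge0 {R d}.
Arguments dot_lb {R d}.
Arguments lip_dot {R d}.
Arguments dotv0 {R d}.


Section Desc0.
Local Open Scope classical_set_scope.



Section Desc.
Variables (R : realType) (d : nat).

Lemma descent_i (Fi : 'rV[R]_d -> R) (Gi : 'rV[R]_d -> 'rV[R]_d) (L : R) x v :
  is_gradient Fi Gi -> 0 <= L ->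
  (forall x y, enorm (Gi x - Gi y) <= L * enorm (x - y)) ->
  Fi (x + v) <= Fi x + dotv (Gi x) v + L * dotv v v.
Proof.
move=> hg L0 hL.
pose phi := fun r : R => Fi (x + r *: v).
have dphi (r : R) : is_derive r (1:R) phi (dotv (Gi (x + r *: v)) v).
  have [dF dd] := hg (x + r *: v).
  have E : (fun h : R => h^-1 *: ((phi \o shift r) (h *: 1) - phi r)) =
           (fun h : R => h^-1 *: ((Fi \o shift (x + r *: v)) (h *: v) - Fi (x + r *: v))).
    apply/funext => h /=; rewrite /phi /shift /=.
    have -> : h *: (1:R) = h by rewrite -[h *: 1]/(h * 1) mulr1.
    by rewrite scalerDl addrCA.
  split.
    have hd : derivable Fi (x + r *: v) v by exact: diff_derivable.
    by move: hd; rewrite /derivable -E.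
  by rewrite /derive E -/(derive Fi (x + r *: v) v) deriveE // dd.
have cont : {within `[0, 1], continuous phi}.
  by apply: derivable_within_continuous => r _; case: (dphi r).
have [c cin] := MVT ltr01 (fun r _ => dphi r) cont.
rewrite /phi scale1r scale0r addr0 subr0 mulr1 => E.
have -> : Fi (x + v) = Fi x + dotv (Gi (x + c *: v)) v by rewrite -E; ring.
rewrite -addrA lerD2l.
have -> : dotv (Gi (x + c *: v)) v = dotv (Gi x) v + dotv (Gi (x + c *: v) - Gi x) v.
  by rewrite dotvBl; ring.
rewrite lerD2l; apply: (lip_dot L c) => //.
  by move: cin; rewrite in_itv /= => /andP[c0 c1]; rewrite !ltW.
by have := hL (x + c *: v) x; rewrite addrAC subrr add0r.
Qed.

Lemma descent_avg n (F : 'I_n -> 'rV[R]_d -> R) (G : 'I_n -> 'rV[R]_d -> 'rV[R]_d) (L : R) x v :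
  (0 < n)%N -> (forall i, is_gradient (F i) (G i)) -> 0 <= L ->
  (forall i x y, enorm (G i x - G i y) <= L * enorm (x - y)) ->
  avgf F (x + v) <= avgf F x + dotv (avggrad G x) v + L * dotv v v.
Proof.
move=> n0 hg L0 hL.
have dA : dotv (avggrad G x) v = n%:R^-1 * \sum_i dotv (G i x) v.
  rewrite /avggrad dotvZl; congr (_ * _); rewrite /dotv.
  under eq_bigr do rewrite summxE mulr_suml.
  by rewrite exchange_big.
have nn : n%:R != 0 :> R by rewrite pnatr_eq0 -lt0n.
rewrite dA /avgf.
have -> : L * dotv v v = n%:R^-1 * \sum_(i < n) (L * dotv v v).
  by rewrite sumr_const card_ord -[_ *+ n]mulr_natr; field.
rewrite -!mulrDr ler_wpM2l ?invr_ge0 ?ler0n // -!big_split /=.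
apply: ler_sum => i _; exact: descent_i.
Qed.
End Desc.

End Desc0.



Section Aux.
Variable R : realType.

Lemma tele (u : nat -> R) T : \sum_(t < T) (u t - u t.+1) = u 0%N - u T.
Proof.
elim: T => [|T IH]; first by rewrite big_ord0 subrr.
by rewrite big_ord_recr /= IH; ring.
Qed.

Lemma lnstep (a e : R) : 0 < a -> 0 <= e -> e / (a + e) <= ln (a + e) - ln a.
Proof.
move=> a0 e0.
have ae : 0 < a + e by lra.
have h := @le_ln1Dx R (a / (a + e) - 1).
have : -1 < a / (a + e) - 1.
  by have := divr_gt0 a0 ae; lra.
move=> /h; rewrite addrCA subrr addr0.
rewrite lnM ?posrE ?invr_gt0 // lnV ?posrE //.
have -> : a / (a + e) - 1 = - (e / (a + e)) by field; lra.
lra.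
Qed.

Lemma bern (Z : R) m : 0 <= Z -> 1 + m%:R * Z <= (1 + Z) ^+ m.
Proof.
move=> Z0; elim: m => [|m IH]; first by rewrite mul0r addr0 expr0.
rewrite exprS -natr1.
have h1 : 0 <= m%:R * Z by rewrite mulr_ge0 ?ler0n.
nra.
Qed.

Lemma lnK8 (K Z : R) : 0 < K -> K <= 2 * Z -> ln (4 * K) <= 8 * ln (1 + Z).
Proof.
move=> K0 KZ; apply: le_trans (_ : ln (1 + Z) *+ 8 <= _); last by rewrite mulr_natl.
have Z0 : 0 < Z by lra.
have hb : 1 + 8%:R * Z <= (1 + Z) ^+ 8 by apply: bern; apply: ltW.
have : ln (4 * K) <= ln ((1 + Z) ^+ 8).
  rewrite ler_ln ?posrE; [|lra|]; last by rewrite exprn_gt0 //; lra.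
  apply: le_trans hb; rewrite [8%:R]/=; lra.
by rewrite lnXn; lra.
Qed.

Lemma logabs (K r s : R) : 0 < K -> 0 < r -> 0 < s ->
  K * (2 * ln s - 2 * ln r) <= s / (2 * r) + 2 * K * ln (4 * K).
Proof.
move=> K0 r0 s0.
have K4 : 0 < 4 * K by rewrite mulr_gt0.
have p : 0 < 4 * K * r by rewrite !mulr_gt0.
have h := ln_sublinear (divr_gt0 s0 p).
have e1 : ln (s / (4 * K * r)) = ln s - ln (4 * K) - ln r.
  rewrite lnM ?posrE ?invr_gt0 // lnV ?posrE // lnM ?posrE //; ring.
rewrite e1 in h.
have -> : s / (2 * r) = 2 * K * (s / (4 * K * r)) by field; lra.
nra.
Qed.

End Aux.
Arguments tele {R}.
Arguments lnstep {R}.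
Arguments bern {R}.
Arguments lnK8 {R}.
Arguments logabs {R}.



Section Path.
Variables (R : realType) (d : nat).

Lemma amgm (a x : R) : 0 < a -> 2 * x <= a * x ^+ 2 + a^-1.
Proof.
move=> a0; rewrite -(ler_pM2l a0) mulrDr mulfV ?gt_eqF //.
have := sqr_ge0 (a * x - 1); nra.
Qed.

Lemma pathwise (f : 'rV[R]_d -> R) (g : 'rV[R]_d -> 'rV[R]_d)
  (L fstar c0 beta G0 Z : R) (X N : nat -> 'rV[R]_d) (S : nat -> R) (k : nat) :
  (forall x v, f (x + v) <= f x + dotv (g x) v + L * dotv v v) ->
  (forall y, fstar <= f y) ->
  0 <= L -> 1 <= c0 -> 0 < beta -> 0 < G0 -> 0 <= Z -> L / (beta * G0) <= Z ->
  let gam Sv := (Num.sqrt c0 * beta * Num.sqrt (c0 * G0 ^+ 2 + Sv))^-1 in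
  (forall t, X t.+1 = X t - gam (S t) *: N t) ->
  S 0%N = enorm (N 0%N) ^+ 2 ->
  (forall t, S t.+1 = S t + enorm (N t.+1) ^+ 2) ->
  \sum_(t < k.+1) enorm (N t) <=
  Num.sqrt c0 * Num.sqrt (k.+1)%:R * (2 * G0 + 4 * beta * (f (X 0%N) - fstar)
     + 2 * beta * \sum_(t < k.+1) gam (S t) * enorm (g (X t) - N t) ^+ 2
     + 64 * (L / beta) * ln (1 + Z)).
Proof.
move=> hdesc hfs L0 c01 b0 G00 Z0 LZ gam hX hS0 hS.
set q := Num.sqrt c0.
have q1 : 1 <= q by rewrite -sqrtr1 ler_sqrt //; lra.
have q0 : 0 < q by lra.
have qq : q ^+ 2 = c0 by rewrite sqr_sqrtr //; lra.
pose nu t := enorm (N t) ^+ 2.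
have nu0 t : 0 <= nu t by rewrite /nu sqr_ge0.
have Sfor t : S t = \sum_(i < t.+1) nu i.
  elim: t => [|t IH]; first by rewrite big_ord_recr big_ord0 /= add0r hS0.
  by rewrite hS big_ord_recr /= IH.
have Sge0 t : 0 <= S t by rewrite Sfor sumr_ge0.
have Smono t m : S t <= S (t + m)%N.
  elim: m => [|m IH]; first by rewrite addn0.
  by rewrite addnS hS; apply: le_trans IH _; rewrite lerDl sqr_ge0.
pose c := c0 * G0 ^+ 2.
have c0p : 0 < c by rewrite /c mulr_gt0 ?exprn_gt0 //; lra.
pose D t := c + S t.
have Dp t : 0 < D t by rewrite /D; have := Sge0 t; lra.
have gamE t : gam (S t) = (q * beta * Num.sqrt (D t))^-1 by [].
have sDp t : 0 < Num.sqrt (D t) by rewrite sqrtr_gt0.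
have gamp t : 0 < gam (S t) by rewrite gamE invr_gt0 !mulr_gt0.
have gam2 t : gam (S t) ^+ 2 = (q ^+ 2 * beta ^+ 2)^-1 / D t.
  rewrite gamE exprVn !exprMn (sqr_sqrtr (ltW (Dp t))).
  by rewrite invfM.
pose e t := enorm (g (X t) - N t) ^+ 2.
have hA t : gam (S t) * nu t <=
    2 * (f (X t) - f (X t.+1)) + gam (S t) * e t + 2 * L * (gam (S t) ^+ 2 * nu t).
  have := hdesc (X t) ((- gam (S t)) *: N t).
  rewrite !dotvZr dotvZl scaleNr -hX => h1.
  have h2 := dot_lb (g (X t)) (N t).
  rewrite /nu /e !enorm_sqr.
  move: h1 h2 (gamp t) (dotv_ge0 (N t)).
  set p := dotv (g (X t)) (N t); set nn := dotv (N t) (N t).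
  set ee := dotv _ _; set gg := gam (S t) => h1 h2 gp nn0.
  have h3 : gg * (nn - ee) <= gg * (2 * p) by rewrite ler_wpM2l // ltW.
  nra.
have hB : \sum_(t < k.+1) gam (S t) * nu t <=
    2 * (f (X 0%N) - f (X k.+1)) + \sum_(t < k.+1) gam (S t) * e t
    + 2 * L * \sum_(t < k.+1) (gam (S t) ^+ 2 * nu t).
  apply: (le_trans (y := \sum_(t < k.+1) (2 * (f (X t) - f (X t.+1)) + gam (S t) * e t
            + 2 * L * (gam (S t) ^+ 2 * nu t)))).
    by apply: ler_sum => t _; exact: hA.
  by rewrite !big_split /= -!mulr_sumr (tele (fun t => f (X t))).
have hC : \sum_(t < k.+1) nu t / D t <= ln (D k) - ln c.
  elim: k {hB} => [|k IH].
    rewrite big_ord_recr big_ord0 /= add0r /D hS0.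
    exact: lnstep.
  rewrite big_ord_recr /=.
  have -> : D k.+1 = D k + nu k.+1 by rewrite /D hS addrA.
  have := lnstep _ _ (Dp k) (nu0 k.+1); lra.
have hC' : \sum_(t < k.+1) (gam (S t) ^+ 2 * nu t) =
    (q ^+ 2 * beta ^+ 2)^-1 * \sum_(t < k.+1) nu t / D t.
  rewrite mulr_sumr; apply: eq_bigr => t _; rewrite gam2; ring.
have gm a b : 0 <= a -> a <= b -> gam b <= gam a.
  move=> a0 ab.
  have ca : 0 < c0 * G0 ^+ 2 + a by have := c0p; rewrite /c; lra.
  have cb : 0 < c0 * G0 ^+ 2 + b by have := c0p; rewrite /c; lra.
  have c0p0 : 0 < c0 by lra.
  rewrite /gam lef_pV2 ?posrE ?mulr_gt0 ?sqrtr_gt0 //.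
  rewrite ler_pM2l ?mulr_gt0 ?sqrtr_gt0 // ler_sqrt; lra.
have hD : gam (S k) * S k <= \sum_(t < k.+1) gam (S t) * nu t.
  rewrite {2}Sfor mulr_sumr; apply: ler_sum => t _.
  rewrite ler_wpM2r //; apply: gm => //.
  have := Smono t (k - t)%N; rewrite subnKC //.
  by have := ltn_ord t; rewrite ltnS.
have hE := hfs (X k.+1).
pose E' := \sum_(t < k.+1) gam (S t) * e t.
have E'0 : 0 <= E' by apply: sumr_ge0 => t _; apply: mulr_ge0; [exact: ltW | exact: sqr_ge0].
set s := Num.sqrt (D k).
pose r := q * G0.
have s0 : 0 < s by apply: sDp.
have r0 : 0 < r by rewrite mulr_gt0.
have ss : s ^+ 2 = D k by rewrite sqr_sqrtr // ltW.
have rr : r ^+ 2 = c by rewrite exprMn qq.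
have rs2 : r ^+ 2 <= s ^+ 2 by rewrite ss rr /D lerDl.
have rs : r <= s by nra.
have lnD : ln (D k) = 2 * ln s by rewrite -ss lnXn // mulr_natl.
have lnc : ln c = 2 * ln r by rewrite -rr lnXn // mulr_natl.
have gk : gam (S k) = (q * beta * s)^-1 by rewrite gamE.
have Sk : S k = s ^+ 2 - r ^+ 2 by rewrite ss rr /D; ring.
have h1 : \sum_(t < k.+1) (gam (S t) ^+ 2 * nu t) <=
    (q ^+ 2 * beta ^+ 2)^-1 * (2 * ln s - 2 * ln r).
  rewrite hC' -lnD -lnc; apply: ler_wpM2l => //.
  by rewrite invr_ge0 mulr_ge0 ?sqr_ge0.
have h2 := ler_wpM2l (mulr_ge0 (ler0n _ 2) L0) h1.
have hM : (s ^+ 2 - r ^+ 2) / (q * beta * s) <=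
    2 * (f (X 0%N) - fstar) + E' + 2 * L * ((q ^+ 2 * beta ^+ 2)^-1 * (2 * ln s - 2 * ln r)).
  rewrite -Sk mulrC -gk; move: hD hB h2 hE; rewrite /E'; lra.
pose M := 2 * L / (q * beta) * (2 * ln s - 2 * ln r).
have P0 : 0 < q * beta * s by rewrite !mulr_gt0.
have key : s ^+ 2 - r ^+ 2 <= q * beta * s * (2 * (f (X 0%N) - fstar) + E') + s * M.
  move: hM; rewrite ler_pdivrMr //.
  have -> : (2 * (f (X 0%N) - fstar) + E' +
     2 * L * ((q ^+ 2 * beta ^+ 2)^-1 * (2 * ln s - 2 * ln r))) * (q * beta * s)
     = q * beta * s * (2 * (f (X 0%N) - fstar) + E') + s * M.
    by rewrite /M; field; rewrite ?gt_eqF //; lra.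
  by [].
have hF : M <= s / 2 + 32 * (L / (q * beta)) * ln (1 + Z).
  have [L00|Lp] := eqVneq L 0.
    rewrite /M L00 !(mulr0, mul0r, addr0); lra.
  have Lpos : 0 < L by rewrite lt_def Lp L0.
  pose K := 2 * L / (q ^+ 2 * beta * G0).
  have K0 : 0 < K by rewrite /K !mulr_gt0 ?invr_gt0 ?exprn_gt0 ?mulr_gt0.
  have KZ : K <= 2 * Z.
    have -> : K = 2 * (L / (beta * G0)) / q ^+ 2 by rewrite /K; field; rewrite ?gt_eqF //; lra.
    rewrite ler_pdivrMr ?exprn_gt0 //.
    have LbG : 0 <= L / (beta * G0) by rewrite divr_ge0 ?mulr_ge0 // ltW.
    have : 1 <= q ^+ 2 by rewrite qq.
    nra.
  have hl := logabs K r s K0 r0 s0.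
  have h8 := lnK8 K Z K0 KZ.
  have -> : M = r * (K * (2 * ln s - 2 * ln r)).
    by rewrite /M /K /r; field; rewrite ?gt_eqF //; lra.
  have -> : 32 * (L / (q * beta)) = 2 * r * K * 8 by rewrite /r /K; field; rewrite ?gt_eqF //; lra.
  have -> : s / 2 = r * (s / (2 * r)) by field; rewrite gt_eqF.
  have rK' : 0 < 2 * r * K by apply: mulr_gt0 => //; apply: mulr_gt0.
  have rK := ltW rK'.
  have := ler_wpM2l (ltW r0) hl.
  have := ler_wpM2l rK h8.
  nra.
pose B' := q * beta * (2 * (f (X 0%N) - fstar) + E') + 32 * (L / (q * beta)) * ln (1 + Z).
have hG : s <= 2 * r + 2 * B'.
  have h3 := ler_wpM2l (ltW s0) hF.
  have h4 := ler_wpM2l (ltW r0) rs.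
  rewrite -(ler_pM2l s0).
  rewrite /B'; nra.
pose sT : R := Num.sqrt (k.+1)%:R.
have sT0 : 0 < sT by rewrite sqrtr_gt0 ltr0n.
have sTT : sT ^+ 2 = (k.+1)%:R by rewrite sqr_sqrtr // ler0n.
pose al := sT / s.
have al0 : 0 < al by rewrite divr_gt0.
have hs : \sum_(t < k.+1) (2 * enorm (N t)) <=
          \sum_(t < k.+1) (al * enorm (N t) ^+ 2 + al^-1).
  by apply: ler_sum => t _; exact: amgm.
have SkE : \sum_(t < k.+1) enorm (N t) ^+ 2 = S k by rewrite Sfor.
rewrite -mulr_sumr big_split /= -mulr_sumr sumr_const card_ord SkE in hs.
have e1 : al * s ^+ 2 = sT * s by rewrite /al; field; rewrite gt_eqF.
have e2 : sT ^+ 2 * al^-1 = sT * s by rewrite /al; field; rewrite ?gt_eqF.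
have hSk : al * S k <= al * s ^+ 2 by apply: ler_wpM2l; [exact: ltW|rewrite Sk; nra].
have e3 : al^-1 *+ k.+1 = sT * s by rewrite -e2 sTT mulr_natl.
rewrite e3 in hs.
have hsum : \sum_(t < k.+1) enorm (N t) <= sT * s by lra.
apply: (le_trans hsum).
pose W := L / beta * ln (1 + Z).
have W0 : 0 <= W.
  apply: mulr_ge0; first by apply: divr_ge0 => //; exact: ltW.
  apply: ln_ge0; lra.
have eW : L / (q * beta) * ln (1 + Z) = W / q by rewrite /W; field; rewrite ?gt_eqF //; lra.
have Wq : W / q <= q * W.
  rewrite ler_pdivrMr //.
  have : 1 <= q * q by nra.
  nra.
have fin : 2 * r + 2 * B' <= q * (2 * G0 + 4 * beta * (f (X 0%N) - fstar)
     + 2 * beta * E' + 64 * (L / beta) * ln (1 + Z)).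
  have e4 : 32 * (L / (q * beta)) * ln (1 + Z) = 32 * (W / q) by rewrite -eW; ring.
  rewrite /B' /r e4.
  have -> : 64 * (L / beta) * ln (1 + Z) = 64 * W by rewrite /W; ring.
  nra.
apply: le_trans (ler_wpM2l (ltW sT0) (le_trans hG fin)) _.
rewrite le_eqVlt; apply/orP; left; apply/eqP; rewrite /E' /e /sT; ring.
Qed.
End Path.



Lemma Exp_le (R : realType) n T (X Y : {ffun 'I_T -> 'I_n} -> R) (A B : R) :
  (0 < n)%N -> (forall w, X w <= A + B * Y w) -> Exp X <= A + B * Exp Y.
Proof.
move=> n0 h; rewrite /Exp.
have N0 : 0 < #|{ffun 'I_T -> 'I_n}|%:R :> R.
  by rewrite ltr0n card_ffun card_ord card_ord expn_gt0 n0.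
rewrite ler_pdivrMr //.
apply: le_trans (ler_sum _ (fun w _ => h w)) _.
rewrite big_split /= sumr_const -mulr_sumr -mulr_natr.
rewrite le_eqVlt; apply/orP; left; apply/eqP; field; exact: (lt0r_neq0 N0).
Qed.

Lemma ada_xS (R : realType) n d G x0 beta0 G0 idx t :
  @ada_x R n d G x0 beta0 G0 idx t.+1 =
  ada_x G x0 beta0 G0 idx t - ada_gam G x0 beta0 G0 idx t *: ada_nabla G x0 beta0 G0 idx t.
Proof.
rewrite /ada_x /ada_gam /ada_nabla /=.
by case: (ada_state G x0 beta0 G0 idx t) => [[x g] S].
Qed.

Lemma ada_SS (R : realType) n d G x0 beta0 G0 idx t :
  (@ada_state R n d G x0 beta0 G0 idx t.+1).2 =
  (ada_state G x0 beta0 G0 idx t).2 + enorm (ada_nabla G x0 beta0 G0 idx t.+1) ^+ 2.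
Proof.
rewrite /ada_nabla /=.
by case: (ada_state G x0 beta0 G0 idx t) => [[x g] S].
Qed.



Theorem lemma4 (R : realType) :
  exists C : R, 0 < C /\
  forall (n d T : nat) (hn : (0 < n)%N) (hT : (1 <= T)%N)
    (F : 'I_n -> 'rV[R]_d -> R) (G : 'I_n -> 'rV[R]_d -> 'rV[R]_d) (L : R)
    (x0 : 'rV[R]_d) (beta0 G0 : R),
    (forall i, is_gradient (F i) (G i)) ->
    (forall i x y, enorm (G i x - G i y) <= L * enorm (x - y)) ->
    (exists m : R, forall x, m <= avgf F x) ->
    0 < beta0 -> 0 < G0 ->
    let fstar := inf (range (avgf F)) in
    let Delta0 := avgf F x0 - fstar in
    let idx w := ext_idx (Ordinal hn) w in
    Exp (fun w : {ffun 'I_T -> 'I_n} =>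
           \sum_(t < T) enorm (ada_nabla G x0 beta0 G0 (idx w) t))
    <= C * (Delta0 * beta0 + G0
            + L / beta0 * ln (1 + n%:R * T%:R
                                  * (L / (beta0 * G0) + enorm (avggrad G x0) / G0))
            + beta0 * Exp (fun w : {ffun 'I_T -> 'I_n} =>
                \sum_(t < T) ada_gam G x0 beta0 G0 (idx w) t
                   * enorm (avggrad G (ada_x G x0 beta0 G0 (idx w) t)
                            - ada_nabla G x0 beta0 G0 (idx w) t) ^+ 2))
         * Num.sqrt (Num.sqrt n%:R) * Num.sqrt T%:R.
Proof.
exists 64; split; first by [].
move=> n d [//|k] hn hT F G L x0 beta0 G0 hg hL [m hm] b0 G00.
cbv zeta.
set fstar := inf (range (avgf F)).
set Delta0 := avgf F x0 - fstar.
set idx := [eta ext_idx (Ordinal hn)].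
have hfs : forall y, fstar <= avgf F y.
  move=> y; rewrite /fstar.
  have hl : has_lbound (range (avgf F)) by exists m => _ [z _ <-].
  by apply: (ge_inf hl); exists y.
have D0 : 0 <= Delta0 by rewrite /Delta0 subr_ge0.
set q := Num.sqrt (Num.sqrt n%:R).
set sT := Num.sqrt (k.+1)%:R.
set Z := n%:R * (k.+1)%:R * (L / (beta0 * G0) + enorm (avggrad G x0) / G0).
set Y := (X in beta0 * Exp X).
have q0 : 0 <= q by apply: sqrtr_ge0.
have sT0 : 0 <= sT by apply: sqrtr_ge0.
have gam0 w t : 0 <= ada_gam G x0 beta0 G0 (idx w) t.
  rewrite /ada_gam /ada_gamma invr_ge0; apply: mulr_ge0; last exact: sqrtr_ge0.
  by apply: mulr_ge0; [exact: sqrtr_ge0 | exact: ltW].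
have Y0 w : 0 <= Y w.
  by apply: sumr_ge0 => t _; apply: mulr_ge0; [exact: gam0 | exact: sqr_ge0].
pose W := L / beta0 * ln (1 + Z).
pose A := 64 * (Delta0 * beta0 + G0 + W) * q * sT.
pose B := 64 * beta0 * q * sT.
have nT1 : 1 <= n%:R * (k.+1)%:R :> R.
  have : 1 <= n%:R :> R by rewrite ler1n.
  have : 1 <= (k.+1)%:R :> R by rewrite ler1n.
  nra.
have DB : 0 <= Delta0 * beta0 by rewrite mulr_ge0 // ltW.
have P0 : 0 <= q * sT by rewrite mulr_ge0.
have perw : forall w, \sum_(t < k.+1) enorm (ada_nabla G x0 beta0 G0 (idx w) t) <= A + B * Y w.
  have [L0|Ln] := leP 0 L; last first.
    have hz : forall v : 'rV[R]_d, enorm v = 0.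
      move=> v; have := hL (Ordinal hn) v 0; rewrite subr0 => h.
      have := enorm_ge0 (G (Ordinal hn) v - G (Ordinal hn) 0); have := enorm_ge0 v.
      move=> h1 h2; apply/eqP; rewrite eq_le h1 andbT; nra.
    have W0 : 0 <= W.
      rewrite /W /Z hz mul0r addr0; apply: mulr_le0.
        by rewrite ler_pdivrMr // mul0r ltW.
      apply: ln_le0; rewrite gerDl.
      apply: mulr_ge0_le0; first by apply: le_trans nT1.
      by rewrite ler_pdivrMr ?mulr_gt0 // mul0r ltW.
    move=> w; rewrite big1 => [|t _]; last exact: hz.
    have : 0 <= B * Y w by rewrite mulr_ge0 // !mulr_ge0 // ltW.
    have : 0 <= A by rewrite /A !mulr_ge0 // addr_ge0 // addr_ge0 // ltW.
    lra.
  have W0 : 0 <= W.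
    apply: mulr_ge0; first by apply: divr_ge0 => //; exact: ltW.
    apply: ln_ge0; rewrite lerDl /Z; apply: mulr_ge0; first by apply: le_trans nT1.
    apply: addr_ge0; apply: divr_ge0 => //; try exact: enorm_ge0.
      by apply: mulr_ge0; exact: ltW.
    by exact: ltW.
  have Z0 : 0 <= Z.
    rewrite /Z; apply: mulr_ge0; first by apply: le_trans nT1.
    apply: addr_ge0; apply: divr_ge0 => //; try exact: enorm_ge0.
      by apply: mulr_ge0; exact: ltW.
    by exact: ltW.
  have LZ : L / (beta0 * G0) <= Z.
    rewrite /Z.
    have a0 : 0 <= L / (beta0 * G0) by apply: divr_ge0 => //; apply: mulr_ge0; exact: ltW.
    have a1 : 0 <= enorm (avggrad G x0) / G0 by apply: divr_ge0; [exact: enorm_ge0|exact: ltW].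
    nra.
  have c01 : 1 <= Num.sqrt n%:R :> R.
    by rewrite -[X in X <= _]sqrtr1 ler_sqrt ?ler0n // ler1n.
  move=> w.
  have h : \sum_(t < k.+1) enorm (ada_nabla G x0 beta0 G0 (idx w) t) <=
      q * sT * (2 * G0 + 4 * beta0 * Delta0 + 2 * beta0 * Y w + 64 * (L / beta0) * ln (1 + Z)) :=
    pathwise R d (avgf F) (avggrad G) L fstar (Num.sqrt n%:R) beta0 G0 Z
      (ada_x G x0 beta0 G0 (idx w)) (ada_nabla G x0 beta0 G0 (idx w))
      (fun t => (ada_state G x0 beta0 G0 (idx w) t).2) k
      (fun x v => @descent_avg R d n F G L x v hn hg L0 hL) hfs L0 c01 b0 G00 Z0 LZ
      (ada_xS R n d G x0 beta0 G0 (idx w)) (erefl _) (ada_SS R n d G x0 beta0 G0 (idx w)).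
  apply: (le_trans h).
  have -> : A + B * Y w = q * sT * (64 * (Delta0 * beta0 + G0 + W) + 64 * beta0 * Y w).
    by rewrite /A /B; ring.
  apply: ler_wpM2l => //.
  have : 0 <= beta0 * Y w by rewrite mulr_ge0 // ltW.
  have -> : 64 * (L / beta0) * ln (1 + Z) = 64 * W by rewrite /W; ring.
  nra.
apply: le_trans (@Exp_le R n k.+1 _ Y A B hn perw) _.
rewrite le_eqVlt; apply/orP; left; apply/eqP; rewrite /A /B /W; ring.
Qed.
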